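(* Let $n\ge3$, $k\ge0$, let $m\ge2$, and let $C=\{(x_\alpha,y_\alpha):\alpha\in[m]\}$ be a strict alternating cycle in $\mathrm{Inc}(A,B)$ for the crown $S_n^k$. Then $mn\le 2(n+k)$.
   Context: For integers $n\ge3$, $k\ge0$, the crown $S_n^k$ is the poset with ground set $A\cup B$, $A=\{a_1,\dots,a_{n+k}\}$, $B=\{b_1,\dots,b_{n+k}\}$, indices cyclic modulo $n+k$; elements of $A$ are pairwise incomparable, as are elements of $B$, and $a_i$ is incomparable to $b_j$ when $j\in\{i,\dots,i+k\}$ (mod $n+k$), while $a_i<b_j$ otherwise. $\mathrm{Inc}(A,B)$ is the set of pairs $(a,b)\in A\times B$ with $a$ incomparable to $b$. An indexed set $\{(x_\alpha,y_\alpha):\alpha\in[m]\}$ of incomparable pairs is an alternating cycle of size $m$ if $x_\alpha\le y_{\alpha-1}$ for all $\alpha\in[m]$ (subscripts cyclic modulo $m$, so $x_1\le y_m$); it is strict if, for all $\alpha,\beta\in[m]$, $x_\alpha\le y_\beta$ holds if and only if $\beta=\alpha-1$. Here $[m]=\{1,\dots,m\}$. *)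

(* Defs.v *)
From mathcomp Require Import all_boot.
Set Implicit Arguments. Unset Strict Implicit. Unset Printing Implicit Defensive.

(* Crown S_n^k: ground set A ∪ B, A = {a_i}, B = {b_j}, indices i, j in
   'I_(n+k) (0-based, cyclic mod n+k). *)
Inductive crown_elt (N : nat) : Type :=
| Ael of 'I_N
| Bel of 'I_N.

(* a_i is incomparable to b_j iff j ∈ {i, ..., i+k} (mod n+k),
   i.e. (j - i) mod (n+k) <= k. *)
Definition crown_inc_AB (n k : nat) (i j : 'I_(n + k)) : bool :=
  ((j + (n + k) - i) %% (n + k) <= k).

Arguments crown_inc_AB : clear implicits.

Definition crown_le (n k : nat) (x y : crown_elt (n + k)) : bool :=
  match x, y with
  | Ael i, Ael i' => i == i'
  | Bel j, Bel j' => j == j'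
  | Ael i, Bel j => ~~ crown_inc_AB n k i j
  | Bel _, Ael _ => false
  end.

Arguments crown_le : clear implicits.

Definition crown_incomparable (n k : nat) (x y : crown_elt (n + k)) : Prop :=
  ~~ crown_le n k x y /\ ~~ crown_le n k y x.

Arguments crown_incomparable : clear implicits.

Definition in_IncAB (n k : nat) (p : crown_elt (n + k) * crown_elt (n + k)) : Prop :=
  (exists i, p.1 = Ael i) /\ (exists j, p.2 = Bel j) /\ crown_incomparable n k p.1 p.2.

Arguments in_IncAB : clear implicits.

Definition cpred (m : nat) (a : 'I_m) : nat := (a + m - 1) %% m.

(* An indexed family C : 'I_m -> pairs is a strict alternating cycle of
   size m: x_a <= y_b iff b = a - 1 (mod m) (this includes the alternating
   condition x_a <= y_(a-1)), together with all pairs being incomparable. *)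
Definition strict_alternating_cycle (n k m : nat)
    (C : 'I_m -> crown_elt (n + k) * crown_elt (n + k)) : Prop :=
  (forall a, crown_incomparable n k (C a).1 (C a).2) /\
  (forall a b : 'I_m, crown_le n k (C a).1 (C b).2 <-> (b : nat) = cpred a).
Arguments strict_alternating_cycle : clear implicits.

(* Main.v *)
Require Import Defs.
From mathcomp Require Import all_boot.
From mathcomp Require Import zify.

Lemma mod_small2 N a : a < N + N -> a %% N = if a < N then a else a - N.
Proof.
move=> h; case: ltnP => h2; first by rewrite modn_small.
rewrite -{1}(subnK h2) modnDr modn_small //; lia.
Qed.

Lemma succ_cpred m (a : 'I_m) : (cpred a).+1 %% m = a.
Proof.
rewrite /cpred; have am := ltn_ord a.
case: (posnP a) => [a0|apos].
  have m0 : 0 < m by move: am; rewrite a0.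
  rewrite a0 add0n (@modn_small (m - 1)); last lia.
  have -> : (m - 1).+1 = m by lia.
  by rewrite modnn.
have -> : a + m - 1 = (a - 1) + m by lia.
rewrite modnDr (@modn_small (a - 1)); last lia.
have -> : (a - 1).+1 = a by lia.
by rewrite modn_small.
Qed.

Lemma cpred_succ m b : b < m -> ((b.+1 %% m) + m - 1) %% m = b.
Proof.
move=> bm; case: (ltnP b.+1 m) => h.
  rewrite (modn_small h).
  have -> : b.+1 + m - 1 = b + m by lia.
  by rewrite modnDr modn_small.
have e : b.+1 = m by lia.
rewrite e modnn add0n modn_small; lia.
Qed.

Lemma sum_le1 (T : finType) (P : pred T) :
  (forall a a', P a -> P a' -> a = a') -> \sum_(a : T) (P a : nat) <= 1.
Proof.
move=> h; case: (pickP P) => [a0 Pa0 | P0].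
  rewrite (bigD1 a0) //= big1 ?Pa0 // => a ne.
  case Pa: (P a) => //; by rewrite (h _ _ Pa Pa0) eqxx in ne.
by rewrite big1 // => a _; rewrite P0.
Qed.

Lemma sum_le2 m (P : pred 'I_m) v1 v2 :
  (forall a, P a -> val a = v1 \/ val a = v2) -> \sum_(a : 'I_m) (P a : nat) <= 2.
Proof.
move=> h.
apply: (@leq_trans (\sum_(a : 'I_m) ((val a == v1) + (val a == v2)))).
  apply: leq_sum => a _; case Pa: (P a) => //=.
  by case: (h a Pa) => ->; rewrite eqxx // addn1.
rewrite big_split /=.
have H1 : forall v, \sum_(a : 'I_m) ((val a == v) : nat) <= 1.
  move=> v; apply: (@sum_le1 _ (fun a : 'I_m => val a == v)).
  by move=> a a' /eqP e1 /eqP e2; apply: val_inj; rewrite /= e1 e2.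
exact: (leq_add (H1 v1) (H1 v2)).
Qed.

Lemma sum_gt N k : \sum_(y < N) ((k < y) : nat) = N - k.+1.
Proof.
elim: N => [|N IH]; first by rewrite big_ord0.
rewrite big_ord_recr /= IH; case: ltnP => /= h; lia.
Qed.

Lemma U_card N k (i : 'I_N) : \sum_(x : 'I_N) ((k < (x + N - i) %% N) : nat) = N - k.+1.
Proof.
have N0 : 0 < N by apply: leq_ltn_trans (ltn_ord i).
pose f (x : 'I_N) : 'I_N := Ordinal (ltn_pmod (x + N - i) N0).
have finj : injective f.
  move=> x y /(congr1 val) /= h; apply: val_inj => /=.
  have : ((x + N - i) %% N + i) %% N = ((y + N - i) %% N + i) %% N by rewrite h.
  rewrite !modnDml.
  have -> : x + N - i + i = x + N by have := ltn_ord i; lia.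
  have -> : y + N - i + i = y + N by have := ltn_ord i; lia.
  by rewrite !modnDr !modn_small.
rewrite -(sum_gt N k).
by rewrite [RHS](reindex_inj finj).
Qed.

Lemma key N k m (i j : 'I_m -> 'I_N) : 0 < m ->
  (forall a b : 'I_m, k < (j b + N - i a) %% N <-> (b : nat) = cpred a) ->
  m * (N - k.+1) + m <= 2 * N.
Proof.
move=> hm0 H.
pose inU (a : 'I_m) (x : 'I_N) := k < (x + N - i a) %% N.
have hsucc : forall a b : 'I_m, inU a (j b) -> (a : nat) = b.+1 %% m.
  by move=> a b /H ->; rewrite succ_cpred.
have jinj : injective j.
  move=> b b' e; have hb := ltn_pmod b.+1 hm0.
  pose a := Ordinal hb.
  have h1 : inU a (j b) by apply/(H a b); rewrite /cpred /= cpred_succ.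
  move: h1; rewrite e => /(H a b') hb'.
  apply: val_inj; rewrite /= hb' /cpred /= cpred_succ //.
have S1 : \sum_(x : 'I_N) \sum_(a : 'I_m) (inU a x : nat) = m * (N - k.+1).
  rewrite exchange_big /=.
  rewrite (eq_bigr (fun _ => N - k.+1)); last by move=> a _; apply: U_card.
  by rewrite sum_nat_const card_ord.
have S2 : \sum_(x : 'I_N) \sum_(b : 'I_m) ((j b == x) : nat) = m.
  rewrite exchange_big /=.
  rewrite (eq_bigr (fun _ => 1)); last first.
    move=> b _; rewrite (bigD1 (j b)) //= eqxx big1 // => x ne.
    by rewrite eq_sym (negbTE ne).
  by rewrite sum_nat_const card_ord muln1.
have S3 : forall x : 'I_N, \sum_(a : 'I_m) (inU a x : nat) + \sum_(b : 'I_m) ((j b == x) : nat) <= 2.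
  move=> x.
  case: (boolP [exists b, j b == x]) => [/existsP [b /eqP jb] | nob].
    apply: (@leq_add _ _ 1 1).
      apply: (@sum_le1 _ (fun a => inU a x)) => a a'.
      rewrite -jb => /hsucc h1 /hsucc h2; by apply: val_inj; rewrite /= h1 h2.
    apply: (@sum_le1 _ (fun b => j b == x)) => b1 b2 /eqP e1 /eqP e2.
    by apply: jinj; rewrite e1 e2.
  rewrite [X in _ + X]big1 ?addn0; last first.
    move=> b _; move/existsPn: nob => /(_ b) /negbTE -> //.
  have N0 : 0 < N by apply: leq_ltn_trans (ltn_ord x).
  pose d (y : 'I_N) := (y + N - x) %% N.
  have b0 : 'I_m := Ordinal hm0.
  have [bR _ hmin] := @arg_minnP _ b0 xpredT (fun b => d (j b)) isT.
  have [bL _ hmax] := @arg_maxnP _ b0 xpredT (fun b => d (j b)) isT.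
  apply: (@sum_le2 m (fun a => inU a x) (bR.+1 %% m) (bL.+1 %% m)) => a hx.
  pose e := (x + N - i a) %% N.
  have he : k < e by [].
  have eN : e < N by apply: ltn_pmod.
  have keyU : forall y : 'I_N, inU a y = (d y + e < N) || (N + k < d y + e).
    move=> y.
    have dN : d y < N by apply: ltn_pmod.
    have m1 : (y + N - i a) %% N = (d y + e) %% N.
      rewrite /d /e modnDm.
      have -> : y + N - x + (x + N - i a) = (y + N - i a) + N.
        have := ltn_ord x; have := ltn_ord (i a); lia.
      by rewrite modnDr.
    rewrite /inU m1 mod_small2; last lia.
    case: ifP => h; first by rewrite /= (leq_trans he (leq_addl _ _)).
    rewrite /=; apply/idP/idP => ?; lia.
  have bcl : cpred a < m by apply: ltn_pmod.
  pose bc := Ordinal bcl.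
  have hb : inU a (j bc) by apply/(H a bc).
  rewrite keyU in hb; case/orP: hb => hb.
    left; apply: hsucc; rewrite keyU; apply/orP; left.
    have := hmin bc isT; rewrite /=; lia.
  right; apply: hsucc; rewrite keyU; apply/orP; right.
  have := hmax bc isT; rewrite /=; lia.
rewrite -S1 -[X in _ + X <= _]S2 -big_split /=.
apply: (@leq_trans (\sum_(x : 'I_N) 2)); first by apply: leq_sum => x _; apply: S3.
by rewrite sum_nat_const card_ord mulnC.
Qed.

Theorem lemma4p2 (n k m : nat) (C : 'I_m -> crown_elt (n + k) * crown_elt (n + k)) :
  3 <= n -> 2 <= m ->
  (forall a, in_IncAB n k (C a)) ->
  strict_alternating_cycle n k m C ->
  m * n <= 2 * (n + k).
Proof.
move=> hn hm hInc [_ hstr].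
pose i a := match (C a).1 with Ael t => t | Bel t => t end.
pose j a := match (C a).2 with Ael t => t | Bel t => t end.
have Ei : forall a, (C a).1 = Ael (i a).
  move=> a; case: (hInc a) => [[t ht] _]; by rewrite /i ht.
have Ej : forall a, (C a).2 = Bel (j a).
  move=> a; case: (hInc a) => [_ [[t ht] _]]; by rewrite /j ht.
have H : forall a b : 'I_m, k < (j b + (n + k) - i a) %% (n + k) <-> (b : nat) = cpred a.
  move=> a b; rewrite -hstr Ei Ej /= /crown_inc_AB ltnNge //.
have := @key _ _ _ i j (ltnW hm) H.
have -> : n + k - k.+1 = n - 1 by lia.
have -> : m * (n - 1) + m = m * n.
  by rewrite -[X in _ + X]muln1 -mulnDr subnK //; lia.
done.
Qed.
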